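(* For $n\le 3$ there is no $[[n,1,3;1]]$ entanglement-assisted stabilizer code (CSS or not): there do not exist $n$ independent pairwise commuting Pauli operators on $n+1$ qubits (qubits $1,\dots,n$ held by Alice, qubit $n+1$ held by Bob), exactly one acting as $X$ on Bob's qubit, exactly one as $Z$, and the rest trivially there, such that for every pair $E_a,E_b\in\{I\}\cup\{X_i,Y_i,Z_i:1\le i\le n\}$ of errors on Alice's qubits, $E_a^\dagger E_b$ either anticommutes with some generator or lies (up to phase) in the generated group.
   Context: $X,Y,Z$ are the single-qubit Pauli matrices and $P_i$ denotes the operator acting as $P$ on qubit $i$ and as identity elsewhere. *)

(* Defs.v *)
From mathcomp Require Import all_boot.
Set Implicit Arguments. Unset Strict Implicit. Unset Printing Implicit Defensive.

(* Single-qubit Pauli operators, taken up to a global phase. *)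
Inductive pauli := PI | PX | PY | PZ.

(* Product of single-qubit Paulis, up to phase (e.g. X*Y = iZ ~ Z). *)
Definition pmul (a b : pauli) : pauli :=
  match a, b with
  | PI, c | c, PI => c
  | PX, PX | PY, PY | PZ, PZ => PI
  | PX, PY | PY, PX => PZ
  | PY, PZ | PZ, PY => PX
  | PZ, PX | PX, PZ => PY
  end.

Definition panti (a b : pauli) : bool :=
  match a, b with
  | PI, _ | _, PI => false
  | PX, PX | PY, PY | PZ, PZ => false
  | _, _ => true
  end.

Definition pstr (m : nat) := 'I_m -> pauli.

Definition pid (m : nat) : pstr m := fun _ => PI.

Definition pstr_mul m (P Q : pstr m) : pstr m := fun q => pmul (P q) (Q q).

(* Equality up to phase: equality of the qubit-wise letters. *)
Definition pstr_eq m (P Q : pstr m) : Prop := forall q, P q = Q q.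

Definition pcommute m (P Q : pstr m) : bool :=
  ~~ odd #|[pred q : 'I_m | panti (P q) (Q q)]|.

Definition panticommute m (P Q : pstr m) : bool := ~~ pcommute P Q.

Definition gen_prod m k (g : 'I_k -> pstr m) (s : seq 'I_k) : pstr m :=
  foldr (fun j acc => pstr_mul (g j) acc) (@pid m) s.

Definition in_gen_group m k (g : 'I_k -> pstr m) (P : pstr m) : Prop :=
  exists s : seq 'I_k, pstr_eq (gen_prod g s) P.

Definition independent m k (g : 'I_k -> pstr m) : Prop :=
  forall S : {set 'I_k}, pstr_eq (gen_prod g (enum S)) (@pid m) -> S = set0.

(* Errors on Alice's qubits 0..n-1 (qubit ord_max = n is Bob's):
   the identity, or a single X_i, Y_i, Z_i with i an Alice qubit. *)
Definition alice_error n (E : pstr n.+1) : Prop :=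
  pstr_eq E (@pid n.+1) \/
  exists i : 'I_n.+1, i != ord_max /\
    E i <> PI /\ forall q, q != i -> E q = PI.

Definition EA_code_n13 n (g : 'I_n -> pstr n.+1) : Prop :=
  [/\ independent g,
      (forall i j, pcommute (g i) (g j)),
      (exists jx jz : 'I_n, [/\ g jx ord_max = PX, g jz ord_max = PZ &
          forall j, j != jx -> j != jz -> g j ord_max = PI]) &
      (forall Ea Eb : pstr n.+1, alice_error Ea -> alice_error Eb ->
         (* E_a^dagger E_b up to phase is the product of Ea and Eb *)
         (exists j, panticommute (pstr_mul Ea Eb) (g j)) \/
         in_gen_group g (pstr_mul Ea Eb))].

(* Main.v *)
Require Import Defs.
From mathcomp Require Import all_boot.
Set Implicit Arguments. Unset Strict Implicit. Unset Printing Implicit Defensive.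

Lemma pmulx1 x : pmul x PI = x. Proof. by case: x. Qed.

Definition single m (a : 'I_m) (p : pauli) : pstr m :=
  fun q => if q == a then p else PI.

Lemma Eval m (a b : 'I_m) p r q : a != b ->
  pstr_mul (single a p) (single b r) q = if q == a then p else if q == b then r else PI.
Proof.
move=> hab; rewrite /pstr_mul /single; case: (q =P a) => [->|_].
  by rewrite (negbTE hab) pmulx1.
by case: (q == b).
Qed.

Lemma alice_single n (a : 'I_n.+1) p : a != ord_max -> alice_error (single a p).
Proof.
move=> ha; case hp: p.
- by left => q; rewrite /single /pid; case: (q == a).
- right; exists a; split=> //; rewrite /single eqxx; split=> // q hq; by rewrite (negbTE hq).
- right; exists a; split=> //; rewrite /single eqxx; split=> // q hq; by rewrite (negbTE hq).
- right; exists a; split=> //; rewrite /single eqxx; split=> // q hq; by rewrite (negbTE hq).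
Qed.

Lemma card_two m (a b : 'I_m) p r (G : pstr m) : a != b ->
  #|[pred q | panti (pstr_mul (single a p) (single b r) q) (G q)]|
    = panti p (G a) + panti r (G b).
Proof.
move=> hab; rewrite (cardD1 a) (cardD1 b).
have hba : b != a by rewrite eq_sym.
rewrite !inE !Eval // !eqxx (negbTE hba) /= addnA.
rewrite (_ : #|_| = 0) ?addn0 //.
apply: eq_card0 => q; rewrite !inE Eval //.
by case: (q =P b); case: (q =P a).
Qed.

Definition pl := [:: PI; PX; PY; PZ].
Definition isI p := if p is PI then true else false.
Definition comm2 (p r x y : pauli) := panti p x == panti r y.
Definition okw x0 y0 x1 y1 x2 y2 (pr : pauli * pauli) :=
  let (p, r) := pr in
  [&& ~~ (isI p && isI r), comm2 p r x0 y0, comm2 p r x1 y1 & comm2 p r x2 y2].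
Definition wit x0 y0 x1 y1 x2 y2 :=
  head (PI, PI) (filter (okw x0 y0 x1 y1 x2 y2) [seq (p, r) | p <- pl, r <- pl]).

Lemma wit_ok x0 y0 x1 y1 x2 y2 : okw x0 y0 x1 y1 x2 y2 (wit x0 y0 x1 y1 x2 y2).
Proof.
case: x0; case: y0; case: x1; case: y1; case: x2; case: y2; vm_compute; reflexivity.
Qed.

Definition i0 : 'I_3 := @Ordinal 3 0 isT.
Definition i1 : 'I_3 := @Ordinal 3 1 isT.
Definition i2 : 'I_3 := @Ordinal 3 2 isT.
Lemma ord3_cases (j : 'I_3) : j = i0 \/ j = i1 \/ j = i2.
Proof.
case: j => [[|[|[|?]]] H]; [left|right;left|right;right|]; try apply/val_inj; by [].
Qed.
Definition j0 : 'I_2 := @Ordinal 2 0 isT.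
Definition j1 : 'I_2 := @Ordinal 2 1 isT.
Lemma ord2_cases (j : 'I_2) : j = j0 \/ j = j1.
Proof.
case: j => [[|[|?]] H]; [left|right|]; try apply/val_inj; by [].
Qed.

Definition P3 (c0 c1 c2 : bool) a0 a1 a2 :=
  pmul (if c0 then a0 else PI) (pmul (if c1 then a1 else PI) (if c2 then a2 else PI)).
Definition P2 (c0 c1 : bool) a0 a1 :=
  pmul (if c0 then a0 else PI) (if c1 then a1 else PI).

Lemma gp3 m (g : 'I_3 -> pstr m) s : exists c0 c1 c2, forall q,
  gen_prod g s q = P3 c0 c1 c2 (g i0 q) (g i1 q) (g i2 q).
Proof.
elim: s => [|j s [c0 [c1 [c2 IH]]]]; first by exists false, false, false.
case: (ord3_cases j) => [->|[->|->]].
- exists (~~ c0), c1, c2 => q; rewrite /= /pstr_mul IH; clear IH.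
  by case: c0; case: c1; case: c2; case: (g i0 q); case: (g i1 q); case: (g i2 q).
- exists c0, (~~ c1), c2 => q; rewrite /= /pstr_mul IH; clear IH.
  by case: c0; case: c1; case: c2; case: (g i0 q); case: (g i1 q); case: (g i2 q).
- exists c0, c1, (~~ c2) => q; rewrite /= /pstr_mul IH; clear IH.
  by case: c0; case: c1; case: c2; case: (g i0 q); case: (g i1 q); case: (g i2 q).
Qed.

Lemma gp2 m (g : 'I_2 -> pstr m) s : exists c0 c1, forall q,
  gen_prod g s q = P2 c0 c1 (g j0 q) (g j1 q).
Proof.
elim: s => [|j s [c0 [c1 IH]]]; first by exists false, false.
case: (ord2_cases j) => [->|->].
- exists (~~ c0), c1 => q; rewrite /= /pstr_mul IH; clear IH.
  by case: c0; case: c1; case: (g j0 q); case: (g j1 q).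
- exists c0, (~~ c1) => q; rewrite /= /pstr_mul IH; clear IH.
  by case: c0; case: c1; case: (g j0 q); case: (g j1 q).
Qed.

Lemma bob3 (g : 'I_3 -> pstr 4) jx jz : g jx ord_max = PX -> g jz ord_max = PZ ->
  (forall j, j != jx -> j != jz -> g j ord_max = PI) ->
  exists k, forall s, gen_prod g s ord_max = PI ->
    (forall q, gen_prod g s q = PI) \/ (forall q, gen_prod g s q = g k q).
Proof.
move=> hx hz hr.
have key : forall k, g k ord_max = PI ->
   (forall c0 c1 c2 : bool, P3 c0 c1 c2 (g i0 ord_max) (g i1 ord_max) (g i2 ord_max) = PI ->
     (forall q, P3 c0 c1 c2 (g i0 q) (g i1 q) (g i2 q) = PI) \/
     (forall q, P3 c0 c1 c2 (g i0 q) (g i1 q) (g i2 q) = g k q)) ->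
   exists k, forall s, gen_prod g s ord_max = PI ->
    (forall q, gen_prod g s q = PI) \/ (forall q, gen_prod g s q = g k q).
  move=> k _ H; exists k => s; have [c0 [c1 [c2 Hc]]] := gp3 g s.
  move=> hs; have := H c0 c1 c2; rewrite -Hc => /(_ hs) [h|h]; [left|right] => q; by rewrite Hc.
case: (ord3_cases jx) => [ex|[ex|ex]]; case: (ord3_cases jz) => [ez|[ez|ez]];
  subst jx jz; try by rewrite hx in hz.
- have hk := hr i2 isT isT; apply: (key i2 hk) => c0 c1 c2.
  rewrite /P3 hx hz hk; case: c0; case: c1; case: c2 => //= h; try discriminate h;
  solve [left => q; by rewrite /= ?pmulx1 | right => q; by rewrite /= ?pmulx1].
- have hk := hr i1 isT isT; apply: (key i1 hk) => c0 c1 c2.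
  rewrite /P3 hx hz hk; case: c0; case: c1; case: c2 => //= h; try discriminate h;
  solve [left => q; by rewrite /= ?pmulx1 | right => q; by rewrite /= ?pmulx1].
- have hk := hr i2 isT isT; apply: (key i2 hk) => c0 c1 c2.
  rewrite /P3 hx hz hk; case: c0; case: c1; case: c2 => //= h; try discriminate h;
  solve [left => q; by rewrite /= ?pmulx1 | right => q; by rewrite /= ?pmulx1].
- have hk := hr i0 isT isT; apply: (key i0 hk) => c0 c1 c2.
  rewrite /P3 hx hz hk; case: c0; case: c1; case: c2 => //= h; try discriminate h;
  solve [left => q; by rewrite /= ?pmulx1 | right => q; by rewrite /= ?pmulx1].
- have hk := hr i1 isT isT; apply: (key i1 hk) => c0 c1 c2.
  rewrite /P3 hx hz hk; case: c0; case: c1; case: c2 => //= h; try discriminate h;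
  solve [left => q; by rewrite /= ?pmulx1 | right => q; by rewrite /= ?pmulx1].
- have hk := hr i0 isT isT; apply: (key i0 hk) => c0 c1 c2.
  rewrite /P3 hx hz hk; case: c0; case: c1; case: c2 => //= h; try discriminate h;
  solve [left => q; by rewrite /= ?pmulx1 | right => q; by rewrite /= ?pmulx1].
Qed.

Lemma bob2 (g : 'I_2 -> pstr 3) jx jz : g jx ord_max = PX -> g jz ord_max = PZ ->
  forall s, gen_prod g s ord_max = PI -> forall q, gen_prod g s q = PI.
Proof.
move=> hx hz s; have [c0 [c1 Hc]] := gp2 g s; rewrite !Hc => hs q; rewrite Hc; move: hs; clear Hc.
case: (ord2_cases jx) => ex; case: (ord2_cases jz) => ez;
  subst jx jz; try by rewrite hx in hz.
- rewrite /P2 hx hz; by case: c0; case: c1 => //= h; try discriminate h.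
- rewrite /P2 hx hz; by case: c0; case: c1 => //= h; try discriminate h.
Qed.

Lemma ne_sym (a b : 'I_4) : a != b -> b != a. Proof. by rewrite eq_sym. Qed.

Lemma comm_even (b1 b2 : bool) : b1 == b2 -> ~~ odd (b1 + b2).
Proof. by case: b1; case: b2. Qed.

Lemma pair3 (g : 'I_3 -> pstr 4) k (a b : 'I_4) :
  (forall i j, pcommute (g i) (g j)) ->
  (forall Ea Eb : pstr 4, alice_error Ea -> alice_error Eb ->
         (exists j, panticommute (pstr_mul Ea Eb) (g j)) \/
         in_gen_group g (pstr_mul Ea Eb)) ->
  (forall s, gen_prod g s ord_max = PI ->
    (forall q, gen_prod g s q = PI) \/ (forall q, gen_prod g s q = g k q)) ->
  a != b -> a != ord_max -> b != ord_max ->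
  exists p r, (p <> PI \/ r <> PI) /\ forall q, g k q = pstr_mul (single a p) (single b r) q.
Proof.
move=> _ hcond hk hab ha hb.
have := wit_ok (g i0 a) (g i0 b) (g i1 a) (g i1 b) (g i2 a) (g i2 b).
case: (wit _ _ _ _ _ _) => p r /and4P [hn h0 h1 h2].
exists p, r; split.
  by move: hn; clear; case: p; case: r => //= _; first [left; discriminate | right; discriminate].
case: (hcond _ _ (alice_single p ha) (alice_single r hb)) => [[j hj]|[s hs]].
  move: hj; rewrite /panticommute /pcommute card_two // negbK.
  case: (ord3_cases j) => [->|[->|->]] hj;
    [move: (comm_even h0)|move: (comm_even h1)|move: (comm_even h2)]; by rewrite hj.
have hB : gen_prod g s ord_max = PI.
  by rewrite hs Eval // (negbTE (ne_sym ha)) (negbTE (ne_sym hb)).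
case: (hk s hB) => h; last by move=> q; rewrite -h hs.
have hpa := hs a; have hrb := hs b.
rewrite h !Eval // eqxx in hpa; rewrite h !Eval // eqxx (negbTE (ne_sym hab)) in hrb.
by move: hn; rewrite -hpa -hrb.
Qed.

Lemma case3 (g : 'I_3 -> pstr 4) : EA_code_n13 g -> False.
Proof.
move=> [_ hcomm [jx [jz [hx hz hr]]] hcond].
have [k hk] := bob3 hx hz hr.
pose a0 : 'I_4 := @Ordinal 4 0 isT.
pose a1 : 'I_4 := @Ordinal 4 1 isT.
pose a2 : 'I_4 := @Ordinal 4 2 isT.
have [p1 [r1 [hn1 e1]]] := @pair3 g k a0 a1 hcomm hcond hk isT isT isT.
have [p2 [r2 [hn2 e2]]] := @pair3 g k a0 a2 hcomm hcond hk isT isT isT.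
have [p3 [r3 [hn3 e3]]] := @pair3 g k a1 a2 hcomm hcond hk isT isT isT.
have x0 := e1 a0; have x1 := e1 a1; have y0 := e3 a0; have y1 := e2 a1.
rewrite Eval // in x0; rewrite Eval // in x1; rewrite Eval // in y0; rewrite Eval // in y1.
simpl in x0, x1, y0, y1.
case: hn1; [rewrite -x0 y0 | rewrite -x1 y1]; by [].
Qed.

Lemma case2 (g : 'I_2 -> pstr 3) : EA_code_n13 g -> False.
Proof.
move=> [_ hcomm [jx [jz [hx hz hr]]] hcond].
have hk := bob2 hx hz.
pose a : 'I_3 := @Ordinal 3 0 isT.
pose b : 'I_3 := @Ordinal 3 1 isT.
have := wit_ok (g j0 a) (g j0 b) (g j1 a) (g j1 b) PI PI.
case: (wit _ _ _ _ _ _) => p r /and4P [hn h0 h1 _].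
have ha : a != ord_max by []. have hb : b != ord_max by []. have hab : a != b by [].
case: (hcond _ _ (alice_single p ha) (alice_single r hb)) => [[j hj]|[s hs]].
  move: hj; rewrite /panticommute /pcommute card_two // negbK.
  case: (ord2_cases j) => [->|->] hj;
    [move: (comm_even h0)|move: (comm_even h1)]; by rewrite hj.
have hB : gen_prod g s ord_max = PI by rewrite hs Eval.
have h := hk s hB.
have hpa := hs a; have hrb := hs b.
rewrite h !Eval // in hpa; rewrite h !Eval // in hrb. simpl in hpa, hrb.
by move: hn; rewrite -hpa -hrb.
Qed.

Theorem mainTheorem8 (n : nat) : n <= 3 ->
  ~ exists g : 'I_n -> pstr n.+1, EA_code_n13 g.
Proof.
case: n => [|[|[|[|n]]]] hn // [g hg].
- by case: hg => _ _ [jx _] _; case: jx.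
- case: hg => _ _ [jx [jz [hx hz _]]] _.
  have e : jx = jz by apply/val_inj; case: jx {hx} => [[|]] //; case: jz {hz} => [[|]].
  by rewrite e hz in hx.
- exact: case2 hg.
- exact: case3 hg.
Qed.
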